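(* Let $\mathcal{H}$ be a real Hilbert space, $f:\mathcal{H}\to(-\infty,+\infty]$ a proper lower semicontinuous function, and $U:\mathcal{H}\to\mathcal{H}$ an operator with $U(x)\in\mathbf{Prox}_f(x)$ for every $x\in\mathcal{H}$. Consider the statements (1) $\operatorname{range}U=\mathcal{H}$; (2) $f+\tfrac12\|\cdot\|^2$ is convex and continuous. Then (1) implies (2). If moreover $U=\mathrm{s\text{-}Prox}_f$, i.e., $f+\tfrac12\|\cdot-x\|^2$ has a unique minimizer for every $x\in\mathcal{H}$, then (1) and (2) are equivalent.
   Context: $\mathbf{Prox}_f:\mathcal{H}\to2^{\mathcal{H}}$, $x\mapsto\operatorname{argmin}_{y}\big(f(y)+\frac12\|x-y\|^2\big)$; when it is single-valued everywhere, the resulting map $\mathcal{H}\to\mathcal{H}$ is denoted $\mathrm{s\text{-}Prox}_f$. *)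

(* Defs.v *)
From HB Require Import structures.
From mathcomp Require Import all_boot all_order all_algebra.
From mathcomp Require Import all_classical all_reals all_analysis.
Set Implicit Arguments. Unset Strict Implicit. Unset Printing Implicit Defensive.
Import Order.TTheory GRing.Theory Num.Theory.
Import numFieldNormedType.Exports.
Local Open Scope classical_set_scope.
Local Open Scope ring_scope.

(* A real Hilbert space: a complete normed space over R whose norm is induced
   by a (symmetric, bilinear) inner product [ip]. *)
Definition is_inner_product (R : realType) (H : completeNormedModType R)
  (ip : H -> H -> R) : Prop :=
  [/\ (forall x y, ip x y = ip y x),
      (forall a x y z, ip (a *: x + y) z = a * ip x z + ip y z) &
      (forall x, `|x| ^+ 2 = ip x x)].

Definition proper_fun (R : realType) (H : Type) (f : H -> \bar R) : Prop :=
  (forall x, f x != -oo%E) /\ (exists x, f x != +oo%E).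

Definition Prox (R : realType) (H : normedModType R) (f : H -> \bar R)
  (x : H) : set H :=
  [set y | forall z, (f y + (2^-1 * `|x - y| ^+ 2)%:E <=
                      f z + (2^-1 * `|x - z| ^+ 2)%:E)%E].

Definition f_plus_half_sq (R : realType) (H : normedModType R)
  (f : H -> \bar R) : H -> \bar R :=
  fun x => (f x + (2^-1 * `|x| ^+ 2)%:E)%E.

Definition convex_ext (R : realType) (H : lmodType R) (g : H -> \bar R) : Prop :=
  forall (x y : H) (t : R), 0 < t -> t < 1 ->
    (g (t *: x + (1 - t) *: y)%R <= t%:E * g x + (1 - t)%:E * g y)%E.

(* continuity of an extended-real-valued function understood as:
   real-valued everywhere and continuous *)
Definition continuous_real_valued (R : realType) (H : topologicalType)
  (g : H -> \bar R) : Prop :=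
  exists h : H -> R, continuous h /\ (forall x, g x = (h x)%:E).

(* Main.v *)
Require Import Defs.
From HB Require Import structures.
From mathcomp Require Import all_boot all_order all_algebra.
From mathcomp Require Import all_classical all_reals all_analysis.
From mathcomp Require Import ring lra.
Import Order.TTheory GRing.Theory Num.Theory.
Import numFieldNormedType.Exports.
Local Open Scope classical_set_scope.
Local Open Scope ring_scope.

Set Implicit Arguments.
Section IP.
Variable R : realType.
Variable H : completeNormedModType R.
Variable ip : H -> H -> R.
Hypothesis ipC : forall x y, ip x y = ip y x.
Hypothesis ipL : forall a x y z, ip (a *: x + y) z = a * ip x z + ip y z.
Hypothesis ipN : forall x, `|x| ^+ 2 = ip x x.

Lemma ipDl x y z : ip (x + y) z = ip x z + ip y z.
Proof. by rewrite -[x in LHS]scale1r ipL mul1r. Qed.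
Lemma ip0l z : ip 0 z = 0.
Proof.
have := ipDl 0 0 z; rewrite addr0 => h; lra.
Qed.
Lemma ipZl a x z : ip (a *: x) z = a * ip x z.
Proof. by rewrite -[_ *: x]addr0 ipL ip0l addr0. Qed.
Lemma ipNl x z : ip (- x) z = - ip x z.
Proof. by rewrite -scaleN1r ipZl mulN1r. Qed.
Lemma ipBl x y z : ip (x - y) z = ip x z - ip y z.
Proof. by rewrite ipDl ipNl. Qed.
Lemma ipDr x y z : ip z (x + y) = ip z x + ip z y.
Proof. by rewrite ipC ipDl (ipC x) (ipC y). Qed.
Lemma ipZr a x z : ip z (a *: x) = a * ip z x.
Proof. by rewrite ipC ipZl ipC. Qed.
Lemma ipNr x z : ip z (- x) = - ip z x.
Proof. by rewrite ipC ipNl ipC. Qed.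
Lemma ipBr x y z : ip z (x - y) = ip z x - ip z y.
Proof. by rewrite ipDr ipNr. Qed.
Lemma ip0r z : ip z 0 = 0.
Proof. by rewrite ipC ip0l. Qed.

Lemma ipxx_ge0 x : 0 <= ip x x.
Proof. by rewrite -ipN sqr_ge0. Qed.

Lemma half_sq_id x y :
  2^-1 * `|x - y| ^+ 2 = 2^-1 * `|y| ^+ 2 + 2^-1 * ip x x - ip y x.
Proof.
rewrite !ipN ipBl !ipBr (ipC x y). lra.
Qed.

Definition subg (G : H -> R) y x := forall z, G y + ip (z - y) x <= G z.

Lemma subg_convex (G : H -> R) :
  (forall y, exists x, subg G y x) ->
  forall a b t, 0 < t -> t < 1 -> G (t *: a + (1 - t) *: b) <= t * G a + (1 - t) * G b.
Proof.
move=> hs a b t t0 t1.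
set w := t *: a + (1 - t) *: b.
have [x hx] := hs w.
have ha := hx a; have hb := hx b.
have e : t * ip (a - w) x + (1 - t) * ip (b - w) x = 0.
  rewrite -!ipZl -ipDl !scalerBr /w.
  rewrite addrACA -opprD -scalerDl [t + _]addrC subrK scale1r subrr.
  by rewrite ip0l.
nra.
Qed.

Definition convR (G : H -> R) := forall a b t, 0 < t -> t < 1 ->
  G (t *: a + (1 - t) *: b) <= t * G a + (1 - t) * G b.
Definition lscR (G : H -> R) := forall y e, e < G y -> \forall z \near y, e < G z.

Lemma baire_bound (G : H -> R) : lscR G ->
  exists a r (n : nat), 0 < r /\ forall z, `|a - z| < r -> G z <= n%:R.
Proof.
move=> Gl; apply: contrapT => hno.
pose F := fun n : nat => [set z | n%:R < G z].
have hd : forall n : nat, open (F n) /\ dense (F n).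
  move=> n; split.
    rewrite openE => z Fz; exact: (Gl z n%:R Fz).
  move=> V [p0 Oo] oO; apply: contrapT => hn.
  rewrite openE in oO.
  have /nbhs_ballP[e e0 he] := oO p0 Oo.
  apply: hno; exists p0, e, n; split => // z hz.
  rewrite leNgt; apply/negP => h; apply: hn; exists z; split => //.
  by apply: he; rewrite -ball_normE /=.
have := @Baire R H F hd setT.
case; [by exists 0|exact: openT|].
move=> z [_ hz].
have := hz (Num.Def.trunc (G z)).+1 Logic.I; rewrite /F /=.
by rewrite ltNge (ltW (truncnS_gt _)).
Qed.

Lemma vid1 (y a v : H) :
  2^-1 *: (2%:R *: y - a) + (1 - 2^-1) *: (a + v) = y + 2^-1 *: v.
Proof.
have -> : (1 - 2^-1 : R) = 2^-1 by field.
by rewrite -scalerDr addrA subrK scalerDr scalerA mulVf ?scale1r.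
Qed.

Lemma vid2 (s : R) (y u : H) : s != 0 ->
  s *: (y + s^-1 *: u) + (1 - s) *: y = y + u.
Proof.
move=> s0; rewrite scalerDr scalerA mulfV // scale1r scalerBl scale1r.
by rewrite addrC addrA subrK.
Qed.

Lemma conv_lsc_cont (G : H -> R) : convR G -> lscR G -> continuous G.
Proof.
move=> Gc Gl.
have [a [r [n [r0 hb]]]] := baire_bound Gl.
move=> y.
pose M := 2^-1 * G (2%:R *: y - a) + (1 - 2^-1) * n%:R.
have hM : forall u, `|u| < r / 2 -> G (y + u) <= M.
  move=> u hu.
  have -> : y + u = y + 2^-1 *: (2%:R *: u).
    by rewrite scalerA mulVf ?scale1r // pnatr_eq0.
  rewrite -(vid1 y a).
  apply: le_trans (Gc _ _ _ _ _) _; [lra|lra|].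
  rewrite /M lerD2l ler_wpM2l; [by []|lra|].
  apply: hb; rewrite opprD addrA subrr sub0r normrN normrZ.
  rewrite ger0_norm; last by [].
  lra.
apply/cvgrPdist_lt => e e0.
pose K := `|M - G y| + 1.
have K0 : 0 < K by rewrite /K; have := normr_ge0 (M - G y); lra.
pose d := Num.min (r / 4) (e * r / (4 * K)).
have d0 : 0 < d by rewrite /d lt_min; apply/andP; split;
  [lra|apply: divr_gt0; [exact: mulr_gt0|lra]].
have hu : \forall z \near y, G z < G y + e.
  apply/nbhs_ballP; exists d => // z; rewrite -ball_normE /= => hz.
  have [zy|zy] := eqVneq z y; first by rewrite zy; lra.
  pose t := `|z - y|.
  have t0 : 0 < t by rewrite /t normr_gt0 subr_eq0.
  have ty : t = `|y - z| by rewrite /t -normrN opprB.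
  move: hz; rewrite /d lt_min -ty => /andP[h1 h2].
  have K4 : 0 < 4 * K by lra.
  move: h2; rewrite ltr_pdivlMr // => h2.
  pose s := 4 * t / r.
  have s0 : 0 < s by rewrite /s; apply: divr_gt0 => //; lra.
  have hsr : s * r = 4 * t by rewrite /s divfK // gt_eqF.
  have s1 : s < 1 by rewrite -(ltr_pM2r r0) hsr; lra.
  have hsK : s * K < e.
    rewrite -(ltr_pM2r r0) mulrAC hsr; lra.
  pose u := s^-1 *: (z - y).
  have hu : `|u| = r / 4.
    rewrite /u normrZ ger0_norm ?invr_ge0 ?ltW // -/t.
    rewrite /s; field; apply/andP; split; rewrite gt_eqF //.
  have ez : z = s *: (y + u) + (1 - s) *: y by rewrite vid2 ?gt_eqF // addrC subrK.
  have hGu : G (y + u) <= M by apply: hM; rewrite hu; lra.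
  rewrite ez; apply: le_lt_trans (Gc _ _ _ s0 s1) _.
  have hMK : M - G y <= K by rewrite /K; have := ler_norm (M - G y); lra.
  have : s * (M - G y) <= s * K by rewrite ler_pM2l.
  nra.
have hl := Gl y (G y - e) ltac:(lra).
apply: filterS2 hl hu => z h1 h2.
rewrite ltr_norml; apply/andP; split; lra.
Qed.

Lemma lim_le_harm (u : nat -> R) (l c : R) : u @ \oo --> l ->
  (forall n, u n <= c + harmonic n) -> l <= c.
Proof.
move=> ul hu.
have hv : (fun n => u n - harmonic n) @ \oo --> l - 0.
  apply: cvgB => //; exact: cvg_harmonic.
rewrite subr0 in hv.
rewrite -(cvg_lim _ hv) //; apply: limr_le; first by apply/cvg_ex; exists l.
by apply: nearW => n; have := hu n; lra.
Qed.

Lemma ip_conv_id (a b y : H) (t : R) :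
  `|t *: a + (1 - t) *: b - y| ^+ 2 =
  t * `|a - y| ^+ 2 + (1 - t) * `|b - y| ^+ 2 - t * (1 - t) * `|a - b| ^+ 2.
Proof.
rewrite !ipN !(ipDl, ipNl, ipZl, ipDr, ipNr, ipZr).
rewrite ?(ipC b a) ?(ipC y a) ?(ipC y b); ring.
Qed.

Lemma harm_le (N n : nat) : (N <= n)%N -> harmonic n <= harmonic N :> R.
Proof.
move=> Nn /=; rewrite lef_pV2 ?posrE ?ltr0Sn // ler_nat; by [].
Qed.

Lemma norm_sq_cont (y : H) : continuous (fun z : H => `|z - y| ^+ 2).
Proof.
move=> x.
have h : (fun z : H => `|z - y|) @ x --> `|x - y|.
  apply: cvg_norm; apply: cvgB; [exact: cvg_id|exact: cvg_cst].
exact: (cvgM h h).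
Qed.

Lemma exists_min (G : H -> R) (m0 lam : R) (y : H) : convR G -> continuous G ->
  (forall z, m0 <= G z) -> 0 < lam ->
  exists p, forall z, lam * G p + 2^-1 * `|p - y| ^+ 2 <= lam * G z + 2^-1 * `|z - y| ^+ 2.
Proof.
move=> Gc Gct Glb l0.
pose Phi z := lam * G z + 2^-1 * `|z - y| ^+ 2.
have Plb : forall z, lam * m0 <= Phi z.
  move=> z; rewrite /Phi; have := Glb z; have := sqr_ge0 `|z - y|; nra.
pose E := range Phi.
have hE : has_inf E.
  split; first by exists (Phi 0), 0.
  by exists (lam * m0) => _ [z _ <-]; exact: Plb.
pose m := inf E.
have mle : forall z, m <= Phi z.
  by move=> z; apply: (ge_inf hE.2); exists z.
have /choice[zs hzs] : forall n, exists z, Phi z < m + harmonic n.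
  move=> n; have [e [z _ <-] he] := inf_adherent (harmonic_gt0 n) hE.
  by exists z.
have mid : forall a b, Phi (2^-1 *: a + (1 - 2^-1) *: b) <=
    2^-1 * Phi a + 2^-1 * Phi b - 8^-1 * `|a - b| ^+ 2.
  move=> a b; rewrite /Phi ip_conv_id.
  have h := Gc a b 2^-1 ltac:(lra) ltac:(lra).
  have h' := ler_wpM2l (ltW l0) h.
  lra.
have est : forall N n, (N <= n)%N -> `|zs N - zs n| ^+ 2 <= 8%:R * harmonic N.
  move=> N n Nn.
  have h1 := mid (zs N) (zs n).
  have h2 := mle (2^-1 *: zs N + (1 - 2^-1) *: zs n).
  have h3 := hzs N; have h4 := hzs n; have h5 := @harm_le N n Nn.
  lra.
have hc : cauchy (zs @ \oo).
  apply: cauchy_exP => eps e0.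
  pose N := Num.Def.trunc (8%:R / eps ^+ 2).
  have hN : 8%:R * harmonic N < eps ^+ 2.
    have k0 : 0 < N.+1%:R :> R by rewrite ltr0Sn.
    have := truncnS_gt (8%:R / eps ^+ 2); rewrite -/N.
    rewrite ltr_pdivrMr ?exprn_gt0 // => h /=.
    rewrite ltr_pdivrMr //; lra.
  exists (zs N); exists N => // n /= Nn.
  rewrite -ball_normE /=.
  have := est N n Nn.
  have := normr_ge0 (zs N - zs n).
  nra.
have zp : cvg (zs @ \oo) by apply: cauchy_cvg.
set p := lim (zs @ \oo) in zp.
exists p => z.
have Pcont : {for p, continuous Phi}.
  rewrite /continuous_at /Phi.
  apply: cvgD; first exact: (cvgMr (Gct p)).
  exact: (cvgMr (norm_sq_cont y p)).
have hz : (Phi \o zs) @ \oo --> Phi p by apply: continuous_cvg.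
change (Phi p <= Phi z); apply: (@lim_le_harm (Phi \o zs)); first exact: hz. move=> n.
change ((Phi (zs n)) <= Phi z + harmonic n); have := hzs n; have := mle z; lra.
Qed.

Lemma sq_split (a b c : H) :
  `|a - c| ^+ 2 = `|a - b| ^+ 2 - 2 * ip (a - b) (c - b) + `|b - c| ^+ 2.
Proof.
rewrite !ipN !(ipDl, ipNl, ipDr, ipNr).
rewrite ?(ipC b a) ?(ipC c a) ?(ipC c b); ring.
Qed.

Lemma eps_le (A B Q : R) : (forall s, 0 < s -> s < 1 -> B - s * Q <= A) ->
  0 <= Q -> B <= A.
Proof.
move=> hs Q0; rewrite leNgt; apply/negP => hAB.
pose d := B - A; pose D := d + Q + 1.
have d0 : 0 < d by rewrite /d; lra.
have D0 : 0 < D by rewrite /D; lra.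
pose s := d / D.
have s0 : 0 < s by apply: divr_gt0.
have sD : s * D = d by rewrite /s divfK // gt_eqF.
have s1 : s < 1 by rewrite -(ltr_pM2r D0) sD mul1r /D; lra.
have := hs s s0 s1.
have : s * Q < s * D by rewrite ltr_pM2l // /D; lra.
rewrite sD /d; lra.
Qed.

Lemma min_subg (G : H -> R) (lam : R) (y p : H) : convR G -> 0 < lam ->
  (forall z, lam * G p + 2^-1 * `|p - y| ^+ 2 <= lam * G z + 2^-1 * `|z - y| ^+ 2) ->
  subg G p (lam^-1 *: (y - p)).
Proof.
move=> Gc l0 hp z.
rewrite ipZr.
suff h : ip (z - p) (y - p) <= lam * (G z - G p).
  have li : 0 < lam^-1 by rewrite invr_gt0.
  have := ler_wpM2l (ltW li) h; rewrite mulrA mulVf ?gt_eqF // mul1r; lra.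
apply: (@eps_le _ _ (2^-1 * `|z - p| ^+ 2)); last first.
  by apply: mulr_ge0; [lra|exact: sqr_ge0].
move=> s s0 s1.
have h1 := hp (s *: z + (1 - s) *: p).
have h2 := Gc z p s s0 s1.
have h3 := ler_wpM2l (ltW l0) h2.
rewrite ip_conv_id (sq_split z p y) in h1.
set P := `|p - y| ^+ 2 in h1 *.
set Q := `|z - p| ^+ 2 in h1 *.
set B := ip (z - p) (y - p) in h1 *.
set Gs := G (s *: z + (1 - s) *: p) in h1 h3.
have : 0 <= s * (lam * (G z - G p)) - s * B + 2^-1 * s * s * Q by nra.
move=> h4.
have h5 : 0 <= lam * (G z - G p) - B + 2^-1 * s * Q.
  have : 0 <= s * (lam * (G z - G p) - B + 2^-1 * s * Q) by nra.
  by rewrite pmulr_rge0.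
nra.
Qed.

Lemma ip_polar (u v : H) :
  ip u v = 2^-1 * (`|u + v| ^+ 2 - `|u| ^+ 2 - `|v| ^+ 2).
Proof.
rewrite !ipN !(ipDl, ipDr) (ipC v u); lra.
Qed.

Lemma sq_cvg (w : nat -> H) (l : H) : w @ \oo --> l ->
  (fun n => `|w n| ^+ 2) @ \oo --> `|l| ^+ 2.
Proof.
move=> wl.
have h : (fun n => `|w n|) @ \oo --> `|l| by apply: cvg_norm.
exact: (cvgM h h).
Qed.

Lemma ip_cvg (u v : nat -> H) (lu lv : H) : u @ \oo --> lu -> v @ \oo --> lv ->
  (fun n => ip (u n) (v n)) @ \oo --> ip lu lv.
Proof.
move=> hu hv.
rewrite ip_polar; under eq_fun do rewrite ip_polar.
apply: cvgMr; apply: cvgB; [apply: cvgB|exact: sq_cvg].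
  by apply: sq_cvg; exact: cvgD.
exact: sq_cvg.
Qed.

Lemma mono_est (G : H -> R) (y a b : H) (l m : R) : 0 < l -> l < m ->
  subg G (y - l *: a) a -> subg G (y - m *: b) b ->
  `|a - b| ^+ 2 <= `|a| ^+ 2 - `|b| ^+ 2.
Proof.
move=> l0 lm ha hb.
have h1 := ha (y - m *: b); have h2 := hb (y - l *: a).
have h3 : ip ((y - m *: b) - (y - l *: a)) a + ip ((y - l *: a) - (y - m *: b)) b <= 0 by lra.
move: h3; rewrite !ipN !(ipDl, ipNl, ipZl, ipDr, ipNr, ipZr) ?(ipC b a) ?(ipC y a) ?(ipC y b).
set P := ip a a; set Q := ip b b; set X := ip a b.
move=> h3.
have h4 : 0 <= P - 2 * X + Q.
  have := ipxx_ge0 (a - b); rewrite !(ipDl, ipNl, ipDr, ipNr) ?(ipC b a) -/P -/Q -/X; lra.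
have h5 : (l + m) * X >= l * P + m * Q by lra.
have h6 : (m - l) * (X - Q) >= 0 by nra.
have h7 : X - Q >= 0.
  have mlp : 0 < m - l by lra.
  by move: h6; rewrite pmulr_rge0 // subr_ge0 => h; lra.
lra.
Qed.

Lemma harm_lt (N n : nat) : (N < n)%N -> harmonic n < harmonic N :> R.
Proof.
move=> Nn /=; rewrite ltf_pV2 ?posrE ?ltr0Sn // ltr_nat; by [].
Qed.

Lemma subg_exists (G : H -> R) (m0 : R) : convR G -> continuous G ->
  (forall z, m0 <= G z) -> forall y, exists x, subg G y x.
Proof.
move=> Gc Gct Glb y.
have [del del0 hdel] : exists2 del, 0 < del & forall z, `|y - z| < del -> G z < G y + 1.
  have := Gct y; move/cvgrPdist_lt => /(_ 1 ltr01) /nbhs_ballP[d d0 hd].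
  exists d => // z hz.
  have := hd z; rewrite -ball_normE /= => /(_ hz).
  rewrite ltr_norml => /andP[h _]; lra.
pose rho := del / 2.
have rho0 : 0 < rho by rewrite /rho; lra.
pose K := G y - m0 + 1.
have K0 : 0 < K by rewrite /K; have := Glb y; lra.
pose lam0 := rho ^+ 2 / (4 * K).
have lam00 : 0 < lam0 by rewrite /lam0; apply: divr_gt0; [exact: exprn_gt0|lra].
pose lam n := lam0 * harmonic n.
have lamp : forall n, 0 < lam n by move=> n; apply: mulr_gt0 => //; exact: harmonic_gt0.
have /choice[p hp] : forall n, exists p, forall z,
    lam n * G p + 2^-1 * `|p - y| ^+ 2 <= lam n * G z + 2^-1 * `|z - y| ^+ 2.
  by move=> n; exact: (@exists_min G m0 (lam n) y Gc Gct Glb (lamp n)).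
pose a n := (lam n)^-1 *: (y - p n).
have pE : forall n, p n = y - lam n *: a n.
  move=> n; rewrite /a scalerA mulfV ?gt_eqF // scale1r.
  by rewrite opprB addrC subrK.
have sg : forall n, subg G (y - lam n *: a n) (a n).
  by move=> n; rewrite -pE; apply: min_subg => //; exact: hp.
have pd : forall n, `|p n - y| ^+ 2 <= 2 * lam n * (G y - m0).
  move=> n; have := hp n y; rewrite subrr normr0 expr0n /= mulr0 addr0.
  have := Glb (p n); have := lamp n; nra.
have harm1 : forall n, harmonic n <= 1 :> R.
  move=> n /=; rewrite invf_le1 ?ler1n ?ltr0Sn //.
have pnear : forall n, `|p n - y| < rho.
  move=> n.
  have h1 := pd n.
  have h2 : lam n <= lam0 by rewrite /lam ler_piMr // ltW.
  have h3 : 2 * lam0 * K = rho ^+ 2 / 2 by rewrite /lam0; field; rewrite gt_eqF.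
  have hGy := Glb y.
  have h4 : `|p n - y| ^+ 2 < rho ^+ 2.
    have : 2 * lam n * (G y - m0) <= 2 * lam0 * K.
      rewrite /K; have := lamp n; nra.
    have := exprn_gt0 2 rho0. lra.
  rewrite ltNge; apply/negP => h; have := normr_ge0 (p n - y); nra.
pose L := K / rho.
have abnd : forall n, `|a n| <= L.
  move=> n.
  have [a0|an0] := eqVneq (a n) 0.
    by rewrite a0 normr0 /L; apply: divr_ge0; lra.
  have na0 : 0 < `|a n| by rewrite normr_gt0.
  pose z := p n + (rho / `|a n|) *: a n.
  have hz : `|y - z| < del.
    rewrite /z opprD addrA.
    apply: (le_lt_trans (ler_normD _ _)).
    rewrite normrN normrZ ger0_norm; last by apply: divr_ge0; [lra|exact: ltW].
    rewrite divfK ?gt_eqF //.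
    have := pnear n; rewrite -normrN opprB /rho; lra.
  have h1 := hdel z hz.
  have h2 := sg n z; rewrite -pE in h2.
  have e : z - p n = (rho / `|a n|) *: a n by rewrite /z addrC addKr.
  rewrite e ipZl -ipN in h2.
  have e2 : rho / `|a n| * `|a n| ^+ 2 = rho * `|a n|.
    by rewrite expr2 mulrA divfK ?gt_eqF.
  rewrite e2 in h2.
  have h3 := Glb (p n).
  rewrite /L ler_pdivlMr //.
  rewrite /K; nra.
pose sq n := `|a n| ^+ 2.
have mono : forall n m, (n < m)%N -> `|a m - a n| ^+ 2 <= sq m - sq n.
  move=> n m nm; apply: (@mono_est G y (a m) (a n) (lam m) (lam n)) => //.
  by rewrite /lam ltr_pM2l //; exact: harm_lt.
have squb : forall n, sq n <= L ^+ 2.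
  move=> n; rewrite /sq; have := abnd n; have := normr_ge0 (a n); nra.
pose ell := sup (range sq).
have hs : has_sup (range sq).
  split; first by exists (sq 0%N), 0%N.
  by exists (L ^+ 2) => _ [n _ <-]; exact: squb.
have sqell : forall n, sq n <= ell by move=> n; apply: (ub_le_sup hs.2); exists n.
have hc : cauchy (a @ \oo).
  apply: cauchy_exP => eps e0.
  have [_ [N _ <-] hN] := sup_adherent (exprn_gt0 2 e0) hs.
  exists (a N); exists N => // n /= Nn.
  rewrite -ball_normE /=.
  move: Nn; rewrite leq_eqVlt => /orP[/eqP <-|Nn]; first by rewrite subrr normr0.
  have h1 := mono N n Nn; have h2 := sqell n.
  have e : `|a N - a n| = `|a n - a N| by rewrite -normrN opprB.
  rewrite e; rewrite ltNge; apply/negP => h.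
  have := normr_ge0 (a n - a N); rewrite -/ell in hN; nra.
have ax : cvg (a @ \oo) by apply: cauchy_cvg.
set x := lim (a @ \oo) in ax.
exists x => z.
have lamc : lam @ \oo --> lam0 * 0.
  by apply: cvgMr; exact: cvg_harmonic.
rewrite mulr0 in lamc.
have pc : p @ \oo --> y.
  have h := cvgB (cvg_cst y) (cvgZ lamc ax).
  rewrite scale0r subr0 in h.
  have -> : p = (fun n => y - lam n *: a n) by apply: funext => n; exact: pE.
  exact: h.
have Gpc : (G \o p) @ \oo --> G y by apply: continuous_cvg => //; exact: Gct.
have ipc : (fun n => ip (z - p n) (a n)) @ \oo --> ip (z - y) x.
  by apply: ip_cvg => //; apply: cvgB => //; exact: cvg_cst.
have uc : (fun n => G (p n) + ip (z - p n) (a n)) @ \oo --> G y + ip (z - y) x.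
  exact: (cvgD Gpc ipc).
apply: (@lim_le_harm _ _ _ uc) => n.
have := sg n z; rewrite -pE; have := harmonic_ge0 n (R := R); lra.
Qed.
End IP.

Unset Implicit Arguments.
Theorem proposition2 (R : realType) (H : completeNormedModType R)
  (ip : H -> H -> R) (Hip : is_inner_product ip)
  (f : H -> \bar R) (fprop : proper_fun f) (flsc : lower_semicontinuous f)
  (U : H -> H) (hU : forall x, Prox f x (U x)) :
  ((range U = setT) ->
     convex_ext (f_plus_half_sq f) /\ continuous_real_valued (f_plus_half_sq f))
  /\
  ((forall x, exists! y, Prox f x y) ->
     ((range U = setT) <->
      (convex_ext (f_plus_half_sq f) /\
       continuous_real_valued (f_plus_half_sq f)))).
Proof.
case: Hip => ipC ipL ipN.
case: fprop => fNy [z0 fz0].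
have prox_subg : forall (G : H -> R),
    (forall z, f z = (G z - 2^-1 * `|z| ^+ 2)%:E) ->
    forall x y, Prox f x y <-> @subg _ _ ip G y x.
  move=> G fE x y; split.
  - move=> hp z; have := hp z; rewrite !fE -!EFinD lee_fin.
    rewrite !(@half_sq_id _ _ ip ipC ipL ipN) (@ipBl _ _ ip ipL); lra.
  - move=> hs z; have := hs z; rewrite !fE -!EFinD lee_fin.
    rewrite !(@half_sq_id _ _ ip ipC ipL ipN) (@ipBl _ _ ip ipL); lra.
have partA : range U = setT ->
    convex_ext (f_plus_half_sq f) /\ continuous_real_valued (f_plus_half_sq f).
  move=> hr.
  have hx : forall y, exists x, Prox f x y.
    move=> y; have : range U y by rewrite hr.
    by case=> x _ <-; exists x.
  have ffin : forall y, f y \is a fin_num.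
    move=> y; have [x hxy] := hx y.
    move: (hxy z0) (fNy y) fz0.
    case: (f z0) => [r0| |] //; case: (f y) => [r| |] //.
  pose G y := fine (f y) + 2^-1 * `|y| ^+ 2.
  have fE : forall z, f z = (G z - 2^-1 * `|z| ^+ 2)%:E.
    by move=> z; rewrite /G addrK fineK.
  have Gs : forall y, exists x, @subg _ _ ip G y x.
    by move=> y; have [x hxy] := hx y; exists x; apply/(prox_subg G fE).
  have Gc : convR H G := subg_convex ipL Gs.
  have Gl : lscR H G.
    move=> y e he.
    pose d := (G y - e) / 2.
    have d0 : 0 < d by rewrite /d; lra.
    have h1 : \forall z \near y, ((fine (f y) - d)%:E < f z)%E.
      have [V hV hVz] := flsc y (fine (f y) - d) ltac:(rewrite -{2}(fineK (ffin y)) lte_fin; lra).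
      exact: (filterS hVz hV).
    have hn : (fun z : H => `|z|) @ y --> `|y| by apply: cvg_norm; exact: cvg_id.
    have hc : (fun z : H => 2^-1 * `|z| ^+ 2) @ y --> 2^-1 * `|y| ^+ 2.
      by apply: cvgMr; exact: (cvgM hn hn).
    move/cvgrPdist_lt : hc => /(_ d d0) h2.
    apply: filterS2 h1 h2 => z hz1 hz2.
    rewrite (fE z) lte_fin in hz1.
    move: hz2; rewrite ltr_norml => /andP[hz2 hz3].
    have : G y = fine (f y) + 2^-1 * `|y| ^+ 2 by [].
    rewrite /d in hz1 hz2 hz3 *; lra.
  have Gct := conv_lsc_cont Gc Gl.
  have fph : forall w, f_plus_half_sq f w = (G w)%:E.
    by move=> w; rewrite /f_plus_half_sq fE -EFinD subrK.
  split.
    move=> a b t t0 t1; rewrite !fph -!EFinM -EFinD lee_fin; exact: Gc.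
  by exists G; split.
split; first exact: partA.
move=> huniq; split; first exact: partA.
case=> hconv [h [hcont hh]].
have fE : forall z, f z = (h z - 2^-1 * `|z| ^+ 2)%:E.
  move=> z; have := hh z; rewrite /f_plus_half_sq.
  case: (f z) => [r| |] //= e.
  by have := e; case=> <-; rewrite addrK.
have Gc : convR H h.
  move=> a b t t0 t1; have := hconv a b t t0 t1.
  by rewrite !hh -!EFinM -EFinD lee_fin.
have Glb : forall z, h (U 0) <= h z.
  move=> z; have := (prox_subg h fE 0 (U 0)).1 (hU 0) z.
  by rewrite (@ip0r _ H ip ipC ipL) addr0.
apply/seteqP; split => // y _.
have [x hx] := @subg_exists _ _ ip ipC ipL ipN h (h (U 0)) Gc hcont Glb y.
have hp : Prox f x y by apply/(prox_subg h fE).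
have [y' [_ hu]] := huniq x.
exists x => //.
by rewrite -(hu _ (hU x)) (hu _ hp).
Qed.
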